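(* Let $\gamma(t)=(t,t^2,t^3)$ be the moment curve in $\mathbb{R}^3$ and let $H_2,H_3\subset\mathbb{R}^3$ be two orthogonal affine planes. Then it is not possible that both $H_2$ and $H_3$ each contain at least three distinct points of $\{\gamma(t):t>0\}$.
   Context: Two affine planes are orthogonal if their normal vectors are orthogonal. *)

(* Defs.v *)
From HB Require Import structures.
From mathcomp Require Import all_boot all_order all_algebra.
From mathcomp Require Import reals.
Set Implicit Arguments. Unset Strict Implicit. Unset Printing Implicit Defensive.
Import Order.TTheory GRing.Theory Num.Theory.
Local Open Scope ring_scope.

Definition vec3 (R : realType) := (R * R * R)%type.

Definition dot3 (R : realType) (u v : vec3 R) : R :=
  u.1.1 * v.1.1 + u.1.2 * v.1.2 + u.2 * v.2.

Definition moment (R : realType) (t : R) : vec3 R := (t, t ^+ 2, t ^+ 3).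

Record plane (R : realType) := Plane {
  pnormal : vec3 R;
  poffset : R;
  pnormal_nz : pnormal <> (0, 0, 0)
}.

Definition on_plane (R : realType) (H : plane R) (x : vec3 R) : Prop :=
  dot3 (pnormal H) x = poffset H.

Definition orthogonal_planes (R : realType) (H1 H2 : plane R) : Prop :=
  dot3 (pnormal H1) (pnormal H2) = 0.

Definition three_positive_moment_points (R : realType) (H : plane R) : Prop :=
  exists t1 t2 t3 : R,
    [/\ 0 < t1, 0 < t2 & 0 < t3] /\
    [/\ moment t1 <> moment t2, moment t1 <> moment t3 & moment t2 <> moment t3] /\
    [/\ on_plane H (moment t1), on_plane H (moment t2) & on_plane H (moment t3)].

(* Main.v *)
Require Import Defs.
From mathcomp Require Import all_boot all_order all_algebra reals.
From mathcomp Require Import ring lra.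
Import Order.TTheory GRing.Theory Num.Theory.
Local Open Scope ring_scope.
Set Implicit Arguments.

Lemma vieta (R : realType) (a b c d t1 t2 t3 : R) :
  t1 != t2 -> t1 != t3 -> t2 != t3 ->
  a * t1 + b * t1 ^+ 2 + c * t1 ^+ 3 = d ->
  a * t2 + b * t2 ^+ 2 + c * t2 ^+ 3 = d ->
  a * t3 + b * t3 ^+ 2 + c * t3 ^+ 3 = d ->
  a = c * (t1 * t2 + t1 * t3 + t2 * t3) /\ b = - (c * (t1 + t2 + t3)).
Proof.
move=> n12 n13 n23 e1 e2 e3.
have q12 : c * (t1^+2 + t1*t2 + t2^+2) + b * (t1 + t2) + a = 0.
  have E : (t1 - t2) * (c * (t1^+2 + t1*t2 + t2^+2) + b * (t1 + t2) + a) =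
    (a * t1 + b * t1 ^+ 2 + c * t1 ^+ 3) - (a * t2 + b * t2 ^+ 2 + c * t2 ^+ 3) by ring.
  move: E; rewrite e1 e2 subrr => /eqP; rewrite mulf_eq0 subr_eq0 (negbTE n12) /=.
  by move/eqP.
have q13 : c * (t1^+2 + t1*t3 + t3^+2) + b * (t1 + t3) + a = 0.
  have E : (t1 - t3) * (c * (t1^+2 + t1*t3 + t3^+2) + b * (t1 + t3) + a) =
    (a * t1 + b * t1 ^+ 2 + c * t1 ^+ 3) - (a * t3 + b * t3 ^+ 2 + c * t3 ^+ 3) by ring.
  move: E; rewrite e1 e3 subrr => /eqP; rewrite mulf_eq0 subr_eq0 (negbTE n13) /=.
  by move/eqP.
have hb : b = - (c * (t1 + t2 + t3)).
  have E : (t2 - t3) * (c * (t1 + t2 + t3) + b) =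
    (c * (t1^+2 + t1*t2 + t2^+2) + b * (t1 + t2) + a) -
    (c * (t1^+2 + t1*t3 + t3^+2) + b * (t1 + t3) + a) by ring.
  move: E; rewrite q12 q13 subrr => /eqP; rewrite mulf_eq0 subr_eq0 (negbTE n23) /=.
  by rewrite addrC addr_eq0 => /eqP.
split=> //.
have : a = - (c * (t1^+2 + t1*t2 + t2^+2) + b * (t1 + t2)).
  by apply/eqP; rewrite -addr_eq0 addrC q12.
by move=> ->; rewrite hb; ring.
Qed.

Lemma neq_of_moment (R : realType) (s t : R) : moment s <> moment t -> s != t.
Proof. by move=> h; apply/eqP => e; apply: h; rewrite e. Qed.

Lemma normal_form (R : realType) (H : plane R) :
  three_positive_moment_points H ->
  exists e1 e2 : R, 0 < e1 /\ 0 < e2 /\ (pnormal H).2 != 0 /\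
    (pnormal H).1.1 = (pnormal H).2 * e2 /\ (pnormal H).1.2 = - ((pnormal H).2 * e1).
Proof.
case: H => [[[a b] c] d nz] [t1 [t2 [t3 [[p1 p2 p3] [[m12 m13 m23] [o1 o2 o3]]]]]].
move: o1 o2 o3; rewrite /on_plane /dot3 /moment /= => o1 o2 o3.
have [ha hb] := @vieta R a b c d t1 t2 t3 (neq_of_moment m12) (neq_of_moment m13) (neq_of_moment m23) o1 o2 o3.
exists (t1 + t2 + t3), (t1 * t2 + t1 * t3 + t2 * t3).
have hc : c != 0.
  apply/eqP => c0; apply: nz; rewrite ha hb c0 !mul0r oppr0; reflexivity.
split; first by rewrite !addr_gt0.
split; first by rewrite !addr_gt0 // mulr_gt0.
by [].
Qed.

Theorem mainTheorem4 (R : realType) (H2 H3 : plane R) :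
  orthogonal_planes H2 H3 ->
  ~ (three_positive_moment_points H2 /\ three_positive_moment_points H3).
Proof.
rewrite /orthogonal_planes /dot3 => hd [h2 h3].
have [e1 [e2 [p1 [p2 [c0 [ha hb]]]]]] := normal_form h2.
have [f1 [f2 [q1 [q2 [c0' [ha' hb']]]]]] := normal_form h3.
move: hd; rewrite ha hb ha' hb'.
set c := (pnormal H2).2; set c' := (pnormal H3).2.
have -> : c * e2 * (c' * f2) + - (c * e1) * - (c' * f1) + c * c' =
  (c * c') * (e2 * f2 + e1 * f1 + 1) by ring.
move/eqP; rewrite mulf_eq0 mulf_eq0 (negbTE c0) (negbTE c0') /=.
have : 0 < e2 * f2 + e1 * f1 + 1 by rewrite !addr_gt0 // mulr_gt0.
by rewrite lt0r => /andP [/negbTE ->].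
Qed.
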